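(* Let $G=(V,E)$ be a graph, let $\mathbb L=\{1,\dots,L\}\subset V$ be a set of training nodes with class labels $y_l\in\{1,\dots,K\}$, and fix a bandwidth $\sigma>0$. For any two nodes $i,j$, let $\mathbf d_i=(d_{i1},\dots,d_{iL})$ and $\mathbf d_j=(d_{j1},\dots,d_{jL})$ be their shortest-path distances to the training nodes. If $d_{il}\ge d_{jl}$ for all $l\in\{1,\dots,L\}$, then $\hat u_{v_i}\ge \hat u_{v_j}$, where $\hat u_{v}$ denotes the GKDE vacuity defined in the context.
   Context: Graph-based Kernel Dirichlet distribution Estimation (GKDE): let $g(d)=\frac{1}{\sigma\sqrt{2\pi}}\exp\!\big(-\frac{d^2}{2\sigma^2}\big)$. For a node $m$ and training node $l$, define $\mathbf h(y_l,d_{ml})=(h_1,\dots,h_K)$ with $h_k=g(d_{ml})$ if $y_l=k$ and $h_k=0$ otherwise, where $d_{ml}$ is the shortest-path distance between $m$ and $l$. The prior evidence of node $m$ is $\hat{\mathbf e}_m=\sum_{l\in\mathbb L}\mathbf h(y_l,d_{ml})=(\hat e_{m1},\dots,\hat e_{mK})$, the prior Dirichlet parameter is $\hat{\boldsymbol\alpha}_m=\hat{\mathbf e}_m+\mathbf 1$, and the GKDE vacuity of node $m$ is $\hat u_{v_m}=\frac{K}{\sum_{k=1}^K\hat\alpha_{mk}}=\frac{K}{\sum_{k=1}^K \hat e_{mk}+K}$. *)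

(* Defs.v *)
From mathcomp Require Import all_boot all_order all_algebra.
From mathcomp Require Import all_classical all_reals all_analysis.
Set Implicit Arguments. Unset Strict Implicit. Unset Printing Implicit Defensive.
Import Order.TTheory GRing.Theory Num.Theory.
Local Open Scope ring_scope.

Definition simple_graph (V : finType) (e : rel V) : Prop :=
  symmetric e /\ irreflexive e.

Definition walk_of_len (V : finType) (e : rel V) (x y : V) (n : nat) : bool :=
  [exists p : n.-tuple V, path e x p && (last x p == y)].

(* Shortest-path distance: Some d if y is reachable from x (a shortest walk
   is a simple path, hence has fewer than #|V| edges), None (= +oo) otherwise. *)
Definition sp_dist (V : finType) (e : rel V) (x y : V) : option nat :=
  let s := iota 0 #|V| in
  if has (walk_of_len e x y) s then Some (find (walk_of_len e x y) s) else None.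

Definition dist_le (a b : option nat) : bool :=
  match a, b with
  | _, None => true
  | None, Some _ => false
  | Some x, Some y => (x <= y)%N
  end.

Definition gkernel (R : realType) (sigma : R) (d : option nat) : R :=
  match d with
  | Some n => (sigma * Num.sqrt (2 * pi))^-1 * expR (- (n%:R ^+ 2) / (2 * sigma ^+ 2))
  | None => 0
  end.

Definition gkde_evidence (R : realType) (V : finType) (e : rel V) (sigma : R)
  (L K : nat) (train : 'I_L -> V) (y : 'I_L -> 'I_K) (m : V) (k : 'I_K) : R :=
  \sum_(l < L) (if y l == k then gkernel sigma (sp_dist e m (train l)) else 0).

(* GKDE vacuity u_hat_{v_m} = K / (sum_k alpha_hat_{mk}), alpha_hat = e_hat + 1. *)
Definition gkde_vacuity (R : realType) (V : finType) (e : rel V) (sigma : R)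
  (L K : nat) (train : 'I_L -> V) (y : 'I_L -> 'I_K) (m : V) : R :=
  K%:R / (\sum_(k < K) (gkde_evidence e sigma train y m k + 1)).

(* Main.v *)
Require Import Defs.
From mathcomp Require Import all_boot all_order all_algebra.
From mathcomp Require Import all_classical all_reals all_analysis.
Import Order.TTheory GRing.Theory Num.Theory.
Local Open Scope ring_scope.

Lemma gk_ge0 (R : realType) (sigma : R) d : 0 < sigma -> 0 <= gkernel sigma d.
Proof.
move=> s0; case: d => [n|] //=.
apply: mulr_ge0; last exact: expR_ge0.
rewrite invr_ge0; apply: mulr_ge0; first exact: ltW.
exact: sqrtr_ge0.
Qed.

Lemma gk_anti (R : realType) (sigma : R) a b : 0 < sigma -> dist_le a b ->
  gkernel sigma b <= gkernel sigma a.
Proof.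
move=> s0; case: b => [m|] ; last by move=> _; exact: gk_ge0.
case: a => [n|] //= nm.
apply: ler_wpM2l.
  rewrite invr_ge0; apply: mulr_ge0; first exact: ltW.
  exact: sqrtr_ge0.
rewrite ler_expR ler_pdivlMr ?mulr_gt0 ?exprn_gt0 //.
idtac.
rewrite divfK ?gt_eqF ?mulr_gt0 ?exprn_gt0 //.
rewrite lerN2 ler_sqr ?ler_nat ?nnegrE ?ler0n //.
Qed.

Theorem proposition1 (R : realType) (V : finType) (e : rel V)
  (L K : nat) (train : 'I_L -> V) (y : 'I_L -> 'I_K) (sigma : R) (i j : V) :
  simple_graph e -> injective train -> (0 < K)%N -> 0 < sigma ->
  (forall l : 'I_L, dist_le (sp_dist e j (train l)) (sp_dist e i (train l))) ->
  gkde_vacuity e sigma train y j <= gkde_vacuity e sigma train y i.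
Proof.
move=> _ _ K0 s0 H.
have ev0 m k : 0 <= gkde_evidence e sigma train y m k.
  apply: sumr_ge0 => l _; case: ifP => _ //; exact: gk_ge0.
have S0 m : 0 < \sum_(k < K) (gkde_evidence e sigma train y m k + 1).
  case: K y K0 ev0 => [|K'] // y' _ ev0'.
  rewrite big_ord_recl; apply: ltr_wpDr.
    by apply: sumr_ge0 => k _; apply: addr_ge0.
  by apply: ltr_wpDl.
rewrite /gkde_vacuity; apply: ler_wpM2l; first exact: ler0n.
rewrite lef_pV2 ?posrE ?S0 //.
apply: ler_sum => k _; rewrite lerD2r.
apply: ler_sum => l _; case: ifP => _ //.
exact: gk_anti.
Qed.
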